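(* Fix $t\in(0,\infty)$. For $0\le\beta\le1$ let $\varphi_\beta$ be the function equal to $1$ on $B(0;\frac{1-\beta}2)$, equal to $\frac12$ on $B(0;\frac{1+\beta}2)\setminus B(0;\frac{1-\beta}2)$, and $0$ elsewhere, and let $\mu(\beta):=\xi(\varphi_\beta,t)$. Then $$\max_{0\le\beta\le1}\mu(\beta)=\max\{\mu(0),\mu(1)\}.$$
   Context: $\|\cdot\|$ is a norm on $\mathbb R^d$, $B(x;\rho)=\{y:\|x-y\|<\rho\}$ (with $B(0;0)=\emptyset$). $H(x)=x\ln x-x+1$. For nonnegative bounded measurable $\varphi$ with $0<\int\varphi<\infty$ and $0<t<\infty$, $s(\varphi,t)$ is the unique $s\ge0$ with $\int H(e^{s\varphi})=1/t$, and $\xi(\varphi,t):=\int\varphi e^{s(\varphi,t)\varphi}$. *)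

(* Defs.v *)
From Stdlib Require Import Reals Lra Lia ClassicalEpsilon.
Open Scope R_scope.

Definition H (x : R) : R := x * ln x - x + 1.

(* Lebesgue measure of the ball B(0;r) = {y : ||y|| < r} in R^d for a norm
   whose open unit ball has volume [kappa] (> 0): vol B(0;r) = kappa * r^d.
   For r = 0 this gives 0, consistent with B(0;0) = emptyset (d >= 1). *)
Definition ball_vol (kappa : R) (d : nat) (r : R) : R := kappa * r ^ d.

Definition r_in (beta : R) : R := (1 - beta) / 2.
Definition r_out (beta : R) : R := (1 + beta) / 2.

(* phi_beta = 1 on B(0;r_in), 1/2 on B(0;r_out) \ B(0;r_in), 0 elsewhere.
   Since H(e^{s*0}) = H 1 = 0, the integral of H(e^{s phi_beta}) is: *)
Definition int_H_phi (kappa : R) (d : nat) (beta s : R) : R :=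
  H (exp (s * 1)) * ball_vol kappa d (r_in beta)
  + H (exp (s * (1/2))) * (ball_vol kappa d (r_out beta) - ball_vol kappa d (r_in beta)).

(* Integral of phi_beta * e^{s phi_beta}. *)
Definition int_phi_exp (kappa : R) (d : nat) (beta s : R) : R :=
  1 * exp (s * 1) * ball_vol kappa d (r_in beta)
  + (1/2) * exp (s * (1/2)) * (ball_vol kappa d (r_out beta) - ball_vol kappa d (r_in beta)).

(* s(phi_beta, t): the (unique) s >= 0 with int H(e^{s phi_beta}) = 1/t. *)
Definition s_phi (kappa : R) (d : nat) (t beta : R) : R :=
  epsilon (inhabits 0) (fun s => 0 <= s /\ int_H_phi kappa d beta s = / t).

Definition mu (kappa : R) (d : nat) (t beta : R) : R :=
  int_phi_exp kappa d beta (s_phi kappa d t beta).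

(* Main.v *)
Require Import Defs.
From Stdlib Require Import Reals.
From Stdlib Require Import Reals Lra Lia ClassicalEpsilon.
Open Scope R_scope.

Lemma ln_le_xm1 x : 0 < x -> ln x <= x - 1.
Proof. intro Hx. pose proof (exp_ineq1_le (ln x)) as H0. rewrite exp_ln in H0; lra. Qed.

Lemma ln_ge_1m x : 0 < x -> 1 - / x <= ln x.
Proof. intro Hx. pose proof (ln_le_xm1 (/x) (Rinv_0_lt_compat _ Hx)) as H0.
  rewrite ln_Rinv in H0 by lra. lra. Qed.

Lemma ln_le_mono x y : 0 < x -> x <= y -> ln x <= ln y.
Proof. intros H0 H1. destruct (Req_dec x y). subst; lra. left; apply ln_increasing; lra. Qed.

Lemma H_exp u : H (exp u) = exp u * u - exp u + 1.
Proof. unfold H. rewrite ln_exp. ring. Qed.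

Lemma H_diff y z : 1 <= y -> y <= z -> (z - y) * ln y <= H z - H y.
Proof.
  intros Hy Hz. unfold H.
  assert (Hz' : 0 < z) by lra.
  assert (E : ln z = ln y + ln (z / y)).
  { rewrite <- ln_mult by (try apply Rdiv_lt_0_compat; lra). f_equal. field. lra. }
  pose proof (ln_ge_1m (z/y) ltac:(apply Rdiv_lt_0_compat; lra)) as H0.
  assert (E2 : / (z/y) = y / z) by (field; lra).
  rewrite E2 in H0.
  rewrite E.
  assert (z * ln (z/y) >= z - y).
  { assert (z * (1 - y/z) = z - y) by (field; lra). nra. }
  nra.
Qed.

Lemma H_mono y z : 1 <= y -> y <= z -> H y <= H z.
Proof. intros H0 H1. pose proof (H_diff y z H0 H1).
  assert (0 <= ln y) by (rewrite <- ln_1; apply ln_le_mono; lra). nra. Qed.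

Lemma H_smono y z : 1 < y -> y < z -> H y < H z.
Proof. intros. pose proof (H_diff y z ltac:(lra) ltac:(lra)).
  assert (0 < ln y) by (rewrite <- ln_1; apply ln_increasing; lra). nra. Qed.

Lemma ln2_ge : 0.6 <= ln 2.
Proof.
  pose proof (exp_ineq1_le (-0.2)).
  assert (E: exp 0.6 = exp 0.2 * exp 0.2 * exp 0.2).
  { rewrite <- !exp_plus. f_equal. lra. }
  assert (E2: exp 0.2 * exp (-0.2) = 1) by (rewrite <- exp_plus; replace (0.2 + -0.2) with 0 by lra; apply exp_0).
  assert (0 < exp 0.2) by apply exp_pos.
  assert (exp 0.2 <= 1.25) by nra.
  assert (exp 0.6 <= 2).
  { rewrite E. assert (0 <= exp 0.2 * exp 0.2) by nra. nra. }
  rewrite <- (ln_exp 0.6). apply ln_le_mono. apply exp_pos. lra.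
Qed.

Lemma ln3_ge : 1 <= ln 3.
Proof. rewrite <- (ln_exp 1). apply ln_le_mono. apply exp_pos. apply exp_le_3. Qed.

Lemma J1 N : 4 <= N -> H (N*N/4) <= N * H (N-1).
Proof.
  intro HN. unfold H.
  assert (EL : ln (N*N/4) = 2 * ln N - 2 * ln 2).
  { unfold Rdiv. rewrite !ln_mult by (try apply Rmult_lt_0_compat; lra).
    rewrite ln_Rinv by lra. replace 4 with (2*2) by ring. rewrite ln_mult by lra. ring. }
  assert (Hl : ln (N-1) - ln N >= - / (N - 1)).
  { assert (E: ln (N-1) = ln N + ln ((N-1)/N)).
    { rewrite <- ln_mult by (try apply Rdiv_lt_0_compat; lra). f_equal. field. lra. }
    pose proof (ln_ge_1m ((N-1)/N) ltac:(apply Rdiv_lt_0_compat; lra)).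
    assert (/ ((N-1)/N) = 1 + / (N-1)) by (field; lra). lra. }
  assert (Hl2 : N * (N-1) * ln (N-1) >= N * (N-1) * ln N - N).
  { assert (N*(N-1) * (- / (N-1)) = - N) by (field; lra).
    assert (0 <= N*(N-1)) by nra. nra. }
  assert (HlN : 2 * ln 2 <= ln N).
  { replace (2 * ln 2) with (ln (2*2)) by (rewrite ln_mult; lra). apply ln_le_mono; lra. }
  pose proof ln2_ge.
  rewrite EL.
  assert (0 <= N*N/2 - N) by nra.
  assert (Hx: (N*N/2 - N) * (2 * ln 2) <= (N*N/2 - N) * ln N) by (apply Rmult_le_compat_l; lra).
  assert (Hy: (N*N) * 0.6 <= (N*N) * ln 2) by (apply Rmult_le_compat_l; nra).
  nra.
Qed.

Lemma J2 N : 4 <= N -> H ((N-1)*(N-1)) <= N * H (N*(N-1)/2).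
Proof.
  intro HN. unfold H.
  assert (E1 : ln ((N-1)*(N-1)) = 2 * ln (N-1)) by (rewrite ln_mult by lra; ring).
  assert (E2 : ln (N*(N-1)/2) = ln N + ln (N-1) - ln 2).
  { unfold Rdiv. rewrite !ln_mult by (try apply Rmult_lt_0_compat; try apply Rinv_0_lt_compat; lra).
    rewrite ln_Rinv by lra. ring. }
  rewrite E1, E2.
  assert (HlN : 2 * ln 2 <= ln N).
  { replace (2 * ln 2) with (ln (2*2)) by (rewrite ln_mult; lra). apply ln_le_mono; lra. }
  assert (HL : 1 <= ln (N-1)).
  { eapply Rle_trans. apply ln3_ge. apply ln_le_mono; lra. }
  pose proof ln_lt_2.
  set (l := ln N) in *. set (L := ln (N-1)) in *. set (l2 := ln 2) in *.
  assert (c1 : 0 <= N*N*(N-1)/2) by (assert (0<=N*N) by nra; nra).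
  assert (Ha : N*N*(N-1)/2 * (l2 - 1) <= N*N*(N-1)/2 * (l - l2 - 1)) by (apply Rmult_le_compat_l; lra).
  assert (c2 : 0 <= (N-1)*(N-2)*(N-2)/2) by (assert (0<=(N-2)*(N-2)) by nra; nra).
  assert (Hb : (N-1)*(N-2)*(N-2)/2 * 1 <= (N-1)*(N-2)*(N-2)/2 * L) by (apply Rmult_le_compat_l; lra).
  assert (Hc : N*N*(N-1)/2 * /2 <= N*N*(N-1)/2 * l2) by (apply Rmult_le_compat_l; lra).
  nra.
Qed.

Lemma F1 d b : (1 <= d)%nat -> 0 <= b <= 1 -> (1-b)^d <= 1 - b.
Proof.
  intros Hd Hb. destruct d. lia. simpl.
  assert (0 <= (1-b)^d <= 1).
  { split. apply pow_le; lra. replace 1 with (1^d) at 2 by apply pow1. apply pow_incr; lra. }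
  nra.
Qed.

Lemma F2 d b : 0 <= b <= 1 -> (1+b)^d <= 1 + (2^d - 1) * b.
Proof.
  intros Hb. induction d. simpl; lra.
  simpl. assert (1 <= 2^d) by (apply pow_R1_Rle; lra).
  assert (0 <= 1 + b) by lra.
  assert ((1+b)*(1+b)^d <= (1+b)*(1 + (2^d-1)*b)) by (apply Rmult_le_compat_l; lra).
  assert (0 <= (2^d-1)*(b - b*b)) by (apply Rmult_le_pos; nra).
  nra.
Qed.

Lemma F3 d b : 0 <= b <= 1/2 -> (1+b)^d <= 1 + 2*b*((3/2)^d - 1).
Proof.
  intros Hb. induction d. simpl; lra.
  simpl. assert (1 <= (3/2)^d) by (apply pow_R1_Rle; lra).
  assert (0 <= 1 + b) by lra.
  assert ((1+b)*(1+b)^d <= (1+b)*(1 + 2*b*((3/2)^d-1))) by (apply Rmult_le_compat_l; lra).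
  assert (0 <= ((3/2)^d-1)*(b - 2*b*b)) by (apply Rmult_le_pos; nra).
  nra.
Qed.

Lemma F4 d b : (2 <= d)%nat -> 0 <= b <= 1 -> (1-b)^d <= (1-b)*(1-b).
Proof.
  intros Hd Hb. destruct d as [|[|d]]; try lia. simpl.
  assert (0 <= (1-b)^d <= 1).
  { split. apply pow_le; lra. replace 1 with (1^d) at 2 by apply pow1. apply pow_incr; lra. }
  assert (0 <= (1-b)*(1-b)) by nra. nra.
Qed.

Lemma F5 d b : (1 <= d)%nat -> 1/2 <= b <= 1 -> (1-b)^d * 2^d <= 2 * (1-b).
Proof.
  intros Hd Hb. destruct d. lia. simpl.
  assert ((1-b)^d * 2^d <= 1).
  { rewrite <- Rpow_mult_distr. apply Rle_trans with (1^d); [apply pow_incr; lra | rewrite pow1; lra]. }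
  assert (0 <= 1 - b) by lra. nra.
Qed.

Lemma F6 d : (2 <= d)%nat -> 4/3 * ((3/2)^d - 1) <= 2^d / 2.
Proof.
  intros Hd. induction d. lia.
  destruct (Nat.eq_dec d 1). subst. simpl. lra.
  assert (IH := IHd ltac:(lia)).
  assert (4 <= 2^d).
  { replace 4 with (2^2) by (simpl; lra). apply Rle_pow; [lra|lia]. }
  simpl. lra.
Qed.

Lemma crux d b v0 v1 : (1 <= d)%nat -> 0 <= b <= 1 -> 1 < v0 -> 1 < v1 ->
  H (v0*v0) = 2^d * H v1 ->
  (1-b)^d * v0 + (1+b)^d <= v0 + 1 \/ (1-b)^d * v1 + (1+b)^d <= 2^d.
Proof.
  intros Hd Hb H0 H1 E.
  set (N := 2^d).
  pose proof (F1 d b Hd Hb) as G1. pose proof (F2 d b Hb) as G2.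
  assert (G0 : 0 <= (1-b)^d) by (apply pow_le; lra).
  fold N in G2.
  destruct (Rle_lt_dec (N-1) v0) as [c1|c1].
  { left. assert (0 <= (v0 - (N-1))*b) by (apply Rmult_le_pos; lra).
    assert ((1-b)^d * v0 <= (1-b)*v0) by (apply Rmult_le_compat_r; lra). nra. }
  destruct (Rle_lt_dec v1 (N-1)) as [c2|c2].
  { right. assert ((1-b)^d * v1 <= (1-b)*(N-1)).
    { apply Rle_trans with ((1-b)*v1). apply Rmult_le_compat_r; lra. apply Rmult_le_compat_l; lra. } nra. }
  assert (Hd2 : (2 <= d)%nat).
  { destruct d as [|[|d]]; try lia. unfold N in c1. simpl in c1. lra. }
  assert (HN : 4 <= N).
  { unfold N. replace 4 with (2^2) by (simpl; lra). apply Rle_pow; [lra|lia]. }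
  destruct (Rle_lt_dec b (1/2)) as [c3|c3].
  - left.
    assert (Hv0 : N/2 <= v0).
    { destruct (Rle_lt_dec (N/2) v0) as [ok|bad]; [exact ok|exfalso].
      assert (K1 : H (v0*v0) < H (N*N/4)) by (apply H_smono; nra).
      pose proof (J1 N HN) as K2.
      assert (K3 : H (N-1) <= H v1) by (apply H_mono; lra).
      fold N in E. nra. }
    pose proof (F3 d b ltac:(lra)) as K1. pose proof (F4 d b Hd2 Hb) as K2. pose proof (F6 d Hd2) as K3.
    fold N in K3.
    assert (K4 : 1.5*b*v0 <= (1 - (1-b)^d)*v0) by (apply Rmult_le_compat_r; nra).
    nra.
  - right.
    assert (Hv1 : v1 <= N*(N-1)/2).
    { destruct (Rle_lt_dec v1 (N*(N-1)/2)) as [ok|bad]; [exact ok|exfalso].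
      assert (K1 : H (v0*v0) < H ((N-1)*(N-1))) by (apply H_smono; nra).
      pose proof (J2 N HN) as K2.
      assert (K3 : H (N*(N-1)/2) <= H v1) by (apply H_mono; nra).
      fold N in E. nra. }
    pose proof (F5 d b Hd ltac:(lra)) as K1. fold N in K1.
    assert (K2 : (1-b)^d * v1 * N <= 2*(1-b) * (N*(N-1)/2)).
    { replace ((1-b)^d * v1 * N) with (((1-b)^d * N) * v1) by ring.
      apply Rmult_le_compat; try nra. }
    assert (K3 : (1-b)^d * v1 <= (1-b)*(N-1)).
    { apply Rmult_le_reg_r with N. lra. nra. }
    nra.
Qed.

Definition Gf a b s := a * H (exp s) + b * H (exp (s/2)).
Definition Xi a b s := a * exp s + b/2 * exp (s/2).
Definition Lam a b s := a*(exp s - 1) + b*(exp (s/2) - 1).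

Lemma exp_half s : exp s = exp (s/2) * exp (s/2).
Proof. rewrite <- exp_plus. f_equal. field. Qed.

Lemma ident a b s : Gf a b s = s * Xi a b s - Lam a b s.
Proof. unfold Gf, Xi, Lam. rewrite !H_exp. field. Qed.

Lemma exp_tan s r : exp s * (1 + (r - s)) <= exp r.
Proof. replace (exp r) with (exp s * exp (r - s)) by (rewrite <- exp_plus; f_equal; ring).
  apply Rmult_le_compat_l. left; apply exp_pos. apply exp_ineq1_le. Qed.

Lemma tangent a b s r : 0 <= a -> 0 <= b -> (r - s) * Xi a b s <= Lam a b r - Lam a b s.
Proof.
  intros Ha Hb. unfold Xi, Lam.
  pose proof (exp_tan s r) as E1. pose proof (exp_tan (s/2) (r/2)) as E2.
  assert (K1 : a * (exp s * (1 + (r - s))) <= a * exp r) by (apply Rmult_le_compat_l; lra).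
  assert (K2 : b * (exp (s/2) * (1 + (r/2 - s/2))) <= b * exp (r/2)) by (apply Rmult_le_compat_l; lra).
  nra.
Qed.

Lemma xi_le a b s r C : 0 <= a -> 0 <= b -> 0 < s -> 0 < r -> Gf a b s = C ->
  Xi a b s <= (C + Lam a b r) / r.
Proof.
  intros Ha Hb Hs Hr E. rewrite ident in E. pose proof (tangent a b s r Ha Hb) as K.
  apply Rmult_le_reg_r with r. lra. unfold Rdiv. rewrite Rmult_assoc, Rinv_l by lra. lra.
Qed.

Lemma xi_eq a b s C : 0 < s -> Gf a b s = C -> Xi a b s = (C + Lam a b s) / s.
Proof. intros Hs E. rewrite ident in E. subst C. field. lra. Qed.

Lemma H_exp_ge u : 0 <= H (exp u).
Proof. rewrite H_exp. pose proof (exp_ineq1_le (-u)) as K1. pose proof (exp_pos u) as K2.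
  assert (K3 : exp u * exp (-u) = 1) by (rewrite <- exp_plus; replace (u + -u) with 0 by ring; apply exp_0).
  nra. Qed.

Lemma H_exp_sq u : 1 <= u -> u * u <= H (exp u).
Proof. intro K0. rewrite H_exp. pose proof (exp_ineq1_le u) as K. nra. Qed.

Lemma Gf_exists a b C : 0 <= a -> 0 <= b -> 0 < a + b -> 0 < C ->
  exists s, 0 <= s /\ Gf a b s = C.
Proof.
  intros Ha Hb Hab HC.
  set (S := 2 + 4 * C / (a + b)).
  assert (HS : 4 * C / (a+b) > 0) by (apply Rdiv_lt_0_compat; lra).
  assert (HS2 : (a+b) * (4 * C / (a+b)) = 4*C) by (field; lra).
  set (f := fun s => a * (exp s * s - exp s + 1) + b * (exp (s/2) * (s/2) - exp (s/2) + 1) - C).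
  assert (Ef : forall s, f s = Gf a b s - C).
  { intro s. unfold f, Gf. rewrite !H_exp. ring. }
  assert (cf : continuity f) by (unfold f; reg).
  assert (f0 : f 0 < 0).
  { rewrite Ef. unfold Gf. replace (0/2) with 0 by field. rewrite exp_0. unfold H. rewrite ln_1. lra. }
  assert (fS : 0 < f S).
  { rewrite Ef. unfold Gf.
    pose proof (H_exp_sq S ltac:(unfold S; lra)) as K1.
    pose proof (H_exp_sq (S/2) ltac:(unfold S; lra)) as K2.
    assert (K3 : a * (S*S) <= a * H (exp S)) by (apply Rmult_le_compat_l; lra).
    assert (K4 : b * (S/2*(S/2)) <= b * H (exp (S/2))) by (apply Rmult_le_compat_l; lra).
    assert (S/2*(S/2) >= S/2) by (unfold S; nra).
    assert (S*S >= S/2) by (unfold S; nra).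
    assert ((a+b) * (S/2) > 2*C).
    { unfold S. nra. }
    nra. }
  destruct (IVT f 0 S cf ltac:(unfold S; lra) f0 fS) as [z [Hz Hfz]].
  exists z. split. lra. rewrite Ef in Hfz. lra.
Qed.

Lemma bv kappa d u : ball_vol kappa d (u/2) = kappa * u^d / 2^d.
Proof. unfold ball_vol, Rdiv. rewrite Rpow_mult_distr, pow_inv. ring. Qed.

Section M.
Lemma intH_eq kappa d beta s :
  int_H_phi kappa d beta s =
  Gf (kappa * (1-beta)^d / 2^d) (kappa * ((1+beta)^d - (1-beta)^d) / 2^d) s.
Proof.
  unfold int_H_phi, Gf, r_in, r_out. rewrite !bv.
  replace (s*1) with s by ring. replace (s*(1/2)) with (s/2) by field.
  assert (0 < 2^d) by (apply pow_lt; lra). field. lra.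
Qed.

Lemma intP_eq kappa d beta s :
  int_phi_exp kappa d beta s =
  Xi (kappa * (1-beta)^d / 2^d) (kappa * ((1+beta)^d - (1-beta)^d) / 2^d) s.
Proof.
  unfold int_phi_exp, Xi, r_in, r_out. rewrite !bv.
  replace (s*1) with s by ring. replace (s*(1/2)) with (s/2) by field.
  assert (0 < 2^d) by (apply pow_lt; lra). field. lra.
Qed.

Lemma Lam_form kappa N X Y r : 0 < N ->
  Lam (kappa * X / N) (kappa * (Y - X) / N) r = kappa / N * (exp (r/2) - 1) * (X * exp (r/2) + Y).
Proof. intro. unfold Lam. rewrite (exp_half r). field. lra. Qed.
End M.

Lemma s_spec kappa d t beta : (0 < d)%nat -> 0 < kappa -> 0 < t -> 0 <= beta <= 1 ->
  0 < s_phi kappa d t beta /\ int_H_phi kappa d beta (s_phi kappa d t beta) = / t.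
Proof.
  intros Hd Hk Ht Hb.
  assert (P : 0 <= s_phi kappa d t beta /\ int_H_phi kappa d beta (s_phi kappa d t beta) = / t).
  { unfold s_phi. apply epsilon_spec.
    setoid_rewrite intH_eq. apply Gf_exists.
    - assert (0 <= (1-beta)^d) by (apply pow_le; lra).
      assert (0 < 2^d) by (apply pow_lt; lra).
      apply Rmult_le_pos. nra. left; apply Rinv_0_lt_compat; lra.
    - assert ((1-beta)^d <= (1+beta)^d) by (apply pow_incr; lra).
      assert (0 < 2^d) by (apply pow_lt; lra).
      apply Rmult_le_pos. nra. left; apply Rinv_0_lt_compat; lra.
    - assert (0 < (1+beta)^d) by (apply pow_lt; lra).
      assert (0 < 2^d) by (apply pow_lt; lra).
      replace (kappa * (1 - beta) ^ d / 2 ^ d + kappa * ((1 + beta) ^ d - (1 - beta) ^ d) / 2 ^ d)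
        with (kappa * (1+beta)^d / 2^d) by (field; lra).
      apply Rdiv_lt_0_compat; nra.
    - apply Rinv_0_lt_compat; lra. }
  destruct P as [P1 P2]. split; [|exact P2].
  destruct P1 as [P1|P1]; [exact P1|].
  exfalso. rewrite <- P1 in P2. rewrite intH_eq in P2. unfold Gf in P2.
  replace (0/2) with 0 in P2 by field. rewrite exp_0 in P2. unfold H in P2. rewrite ln_1 in P2.
  assert (0 < / t) by (apply Rinv_0_lt_compat; lra). lra.
Qed.

Lemma mu_bound kappa d t beta r : (0 < d)%nat -> 0 < kappa -> 0 < t -> 0 <= beta <= 1 -> 0 < r ->
  mu kappa d t beta <= (/ t + kappa / 2^d * (exp (r/2) - 1) * ((1-beta)^d * exp (r/2) + (1+beta)^d)) / r.
Proof.
  intros Hd Hk Ht Hb Hr.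
  destruct (s_spec kappa d t beta Hd Hk Ht Hb) as [Hs E].
  assert (0 < 2^d) by (apply pow_lt; lra).
  rewrite <- Lam_form by lra.
  unfold mu. rewrite intP_eq. rewrite intH_eq in E.
  apply xi_le; auto.
  - assert (0 <= (1-beta)^d) by (apply pow_le; lra).
    apply Rmult_le_pos. nra. left; apply Rinv_0_lt_compat; lra.
  - assert ((1-beta)^d <= (1+beta)^d) by (apply pow_incr; lra).
    apply Rmult_le_pos. nra. left; apply Rinv_0_lt_compat; lra.
Qed.

Lemma mu_eq kappa d t beta : (0 < d)%nat -> 0 < kappa -> 0 < t -> 0 <= beta <= 1 ->
  let s := s_phi kappa d t beta in
  mu kappa d t beta = (/ t + kappa / 2^d * (exp (s/2) - 1) * ((1-beta)^d * exp (s/2) + (1+beta)^d)) / s.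
Proof.
  intros Hd Hk Ht Hb s.
  destruct (s_spec kappa d t beta Hd Hk Ht Hb) as [Hs E].
  assert (0 < 2^d) by (apply pow_lt; lra).
  rewrite <- Lam_form by lra.
  unfold mu. rewrite intP_eq. rewrite intH_eq in E.
  apply xi_eq; auto.
Qed.

Theorem lemma6p5 (d : nat) (kappa t : R) :
  (0 < d)%nat -> 0 < kappa -> 0 < t ->
  forall beta : R, 0 <= beta <= 1 ->
    mu kappa d t beta <= Rmax (mu kappa d t 0) (mu kappa d t 1).
Proof.
  intros Hd Hk Ht beta Hb.
  assert (HN : 0 < 2^d) by (apply pow_lt; lra).
  assert (Hb0 : 0 <= 0 <= 1) by lra. assert (Hb1 : 0 <= 1 <= 1) by lra.
  pose proof (mu_eq kappa d t 0 Hd Hk Ht Hb0) as M0. simpl in M0.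
  pose proof (mu_eq kappa d t 1 Hd Hk Ht Hb1) as M1. simpl in M1.
  destruct (s_spec kappa d t 0 Hd Hk Ht Hb0) as [S0 E0].
  destruct (s_spec kappa d t 1 Hd Hk Ht Hb1) as [S1 E1].
  set (s0 := s_phi kappa d t 0) in *. set (s1 := s_phi kappa d t 1) in *.
  assert (X0 : (1-0)^d = 1) by (replace (1-0) with 1 by ring; apply pow1).
  assert (Y0 : (1+0)^d = 1) by (replace (1+0) with 1 by ring; apply pow1).
  assert (X1 : (1-1)^d = 0) by (replace (1-1) with 0 by ring; apply pow_i; lia).
  assert (Y1 : (1+1)^d = 2^d) by (replace (1+1) with 2 by ring; reflexivity).
  rewrite intH_eq in E0, E1.
  rewrite X0, Y0 in M0, E0. rewrite X1, Y1 in M1, E1. unfold Gf in E0, E1.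
  set (v0 := exp (s0/2)) in *. set (v1 := exp (s1/2)) in *.
  assert (V0 : 1 < v0) by (unfold v0; pose proof (exp_ineq1 (s0/2)); lra).
  assert (V1 : 1 < v1) by (unfold v1; pose proof (exp_ineq1 (s1/2)); lra).
  assert (Rel : H (v0*v0) = 2^d * H v1).
  { rewrite (exp_half s0) in E0. fold v0 in E0.
    replace (kappa * 1 / 2^d) with (kappa / 2^d) in E0 by (field; lra).
    replace (kappa * 0 / 2^d) with 0 in E1 by (field; lra).
    replace (kappa * (2^d - 0) / 2^d) with kappa in E1 by (field; lra).
    replace (kappa * (1 - 1) / 2^d) with 0 in E0 by (field; lra).
    apply Rmult_eq_reg_l with (kappa / 2^d).
    2: { apply Rgt_not_eq. apply Rdiv_lt_0_compat; lra. }
    replace (kappa / 2^d * (2^d * H v1)) with (kappa * H v1) by (field; lra).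
    lra. }
  assert (Kp : 0 < kappa / 2^d) by (apply Rdiv_lt_0_compat; lra).
  destruct (crux d beta v0 v1 Hd Hb V0 V1 Rel) as [A|B].
  - eapply Rle_trans. apply (mu_bound kappa d t beta s0 Hd Hk Ht Hb S0). fold v0.
    eapply Rle_trans. 2: apply Rmax_l. rewrite M0.
    apply Rmult_le_compat_r. left; apply Rinv_0_lt_compat; lra.
    assert (0 <= kappa / 2^d * (v0 - 1)) by (apply Rmult_le_pos; lra).
    assert (kappa / 2^d * (v0 - 1) * ((1-beta)^d * v0 + (1+beta)^d) <= kappa / 2^d * (v0 - 1) * (1 * v0 + 1))
      by (apply Rmult_le_compat_l; lra).
    lra.
  - eapply Rle_trans. apply (mu_bound kappa d t beta s1 Hd Hk Ht Hb S1). fold v1.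
    eapply Rle_trans. 2: apply Rmax_r. rewrite M1.
    apply Rmult_le_compat_r. left; apply Rinv_0_lt_compat; lra.
    assert (0 <= kappa / 2^d * (v1 - 1)) by (apply Rmult_le_pos; lra).
    assert (kappa / 2^d * (v1 - 1) * ((1-beta)^d * v1 + (1+beta)^d) <= kappa / 2^d * (v1 - 1) * (0 * v1 + 2^d))
      by (apply Rmult_le_compat_l; lra).
    lra.
Qed.
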